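(* Let $R$ be a right $\sigma$-reversible ring, where $\sigma$ is an endomorphism of $R$ with $\sigma(1)=1$. Then (1) $\sigma(e)=e$ for every idempotent $e\in R$; and (2) $R$ is abelian, i.e. every idempotent of $R$ is central.
   Context: All rings are associative with identity; $\sigma$ denotes a nonzero, non-identity ring endomorphism of $R$. $R$ is right $\sigma$-reversible if for all $a,b\in R$, $ab=0$ implies $b\sigma(a)=0$. *)

(* Defs.v *)
From HB Require Import structures.
From mathcomp Require Import all_boot all_order all_algebra.
Set Implicit Arguments. Unset Strict Implicit. Unset Printing Implicit Defensive.
Import GRing.Theory.
Local Open Scope ring_scope.

Definition right_sigma_reversible (R : nzRingType) (sigma : R -> R) : Prop :=
  forall a b : R, a * b = 0 -> b * sigma a = 0.

Definition is_idempotent (R : nzRingType) (e : R) : Prop := e * e = e.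

Definition abelian_ring (R : nzRingType) : Prop :=
  forall e : R, is_idempotent e -> forall x : R, e * x = x * e.

(* Main.v *)
Require Import Defs.
From HB Require Import structures.
From mathcomp Require Import all_boot all_order all_algebra.
Import GRing.Theory.
Local Open Scope ring_scope.

Theorem lemma3p1 (R : nzRingType) (sigma : {rmorphism R -> R})
  (Hnz : exists x : R, sigma x <> 0)
  (Hnid : exists x : R, sigma x <> x)
  (Hrev : right_sigma_reversible sigma) :
  (forall e : R, is_idempotent e -> sigma e = e) /\ abelian_ring R.
Proof.
have fix_e : forall e : R, is_idempotent e -> sigma e = e.
  move=> e He.
  have h1 : e * (1 - e) = 0 by rewrite mulrBr mulr1 He subrr.
  have h2 : (1 - e) * e = 0 by rewrite mulrBl mul1r He subrr.
  have := Hrev _ _ h1; rewrite mulrBl mul1r => /eqP; rewrite subr_eq0 => /eqP A.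
  have := Hrev _ _ h2; rewrite rmorphB rmorph1 mulrBr mulr1 => /eqP; rewrite subr_eq0 => /eqP B.
  by rewrite A -B.
split => // e He x.
have h1 : e * ((1 - e) * x) = 0 by rewrite mulrA mulrBr mulr1 He subrr mul0r.
have h2 : (1 - e) * (e * x) = 0 by rewrite mulrA mulrBl mul1r He subrr mul0r.
have := Hrev _ _ h1; rewrite fix_e // !mulrBl !mul1r => /eqP; rewrite subr_eq0 => /eqP A.
have := Hrev _ _ h2; rewrite rmorphB rmorph1 fix_e // mulrBr mulr1 => /eqP; rewrite subr_eq0 => /eqP B.
by rewrite A -B.
Qed.
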